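(* If $C$ is a projective linear code of length $n$ over $\mathbb{Z}_4$ of type $4^{k_1}2^{k_2}$, then $n\le 2^{2k_1+k_2-1}-2^{k_1+k_2-1}$.
   Context: A linear code of length $n$ over $\mathbb{Z}_4$ is a $\mathbb{Z}_4$-submodule of $\mathbb{Z}_4^n$, of type $4^{k_1}2^{k_2}$ if isomorphic to $\mathbb{Z}_4^{k_1}\times\mathbb{Z}_2^{k_2}$. Lee weight: $w_L(0)=0,w_L(1)=1,w_L(2)=2,w_L(3)=1$, additive on vectors. $C$ is projective if its dual $C^\perp=\{\mathbf{x}:\sum x_iy_i=0\in\mathbb{Z}_4\ \forall\mathbf{y}\in C\}$ has minimum nonzero Lee weight at least $3$. *)

(* Defs.v *)
From HB Require Import structures.
From mathcomp Require Import all_boot all_order all_algebra.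
Set Implicit Arguments. Unset Strict Implicit. Unset Printing Implicit Defensive.
Import GRing.Theory.
Local Open Scope ring_scope.

Definition z4_linear_code (n : nat) (C : {set 'rV['Z_4]_n}) : Prop :=
  [/\ (0 : 'rV['Z_4]_n) \in C,
      (forall x y, x \in C -> y \in C -> x + y \in C) &
      (forall (a : 'Z_4) x, x \in C -> a *: x \in C)].

(* C is of type 4^k1 2^k2: C is isomorphic (as a Z_4-module, equivalently as an
   abelian group) to Z_4^k1 x Z_2^k2, witnessed by an additive bijection
   f : Z_4^k1 x Z_2^k2 -> C. *)
Definition z4_code_type (n k1 k2 : nat) (C : {set 'rV['Z_4]_n}) : Prop :=
  exists f : 'rV['Z_4]_k1 -> 'rV['Z_2]_k2 -> 'rV['Z_4]_n,
    [/\ (forall a1 b1 a2 b2, f (a1 + a2) (b1 + b2) = f a1 b1 + f a2 b2),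
        (forall a1 b1 a2 b2, f a1 b1 = f a2 b2 -> a1 = a2 /\ b1 = b2),
        (forall a b, f a b \in C) &
        (forall x, x \in C -> exists a b, f a b = x)].

Definition lee_weight (x : 'Z_4) : nat :=
  match val x with 0 => 0 | 1 => 1 | 2 => 2 | _ => 1 end%N.

Definition lee_weight_vec (n : nat) (v : 'rV['Z_4]_n) : nat :=
  (\sum_(i < n) lee_weight (v ord0 i))%N.

Definition z4_dual (n : nat) (C : {set 'rV['Z_4]_n}) : {set 'rV['Z_4]_n} :=
  [set x : 'rV['Z_4]_n | [forall y in C, \sum_(i < n) x ord0 i * y ord0 i == 0]].

Definition z4_projective (n : nat) (C : {set 'rV['Z_4]_n}) : Prop :=
  forall x, x \in z4_dual C -> x != 0 -> (3 <= lee_weight_vec x)%N.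

(* Main.v *)
Require Import Defs.
From mathcomp Require Import all_boot all_order all_algebra.
From mathcomp Require Import zify.
Set Implicit Arguments. Unset Strict Implicit. Unset Printing Implicit Defensive.
Import GRing.Theory.

Section Helpers.
Local Open Scope ring_scope.

Lemma addMn_lin (k : nat) (R : finComNzRingType) (h : 'rV[R]_k -> 'Z_4)
  (hadd : forall x y, h (x + y) = h x + h y) :
  h 0 = 0 /\ forall v m, h (v *+ m) = h v *+ m.
Proof.
have h0 : h 0 = 0.
  by apply: (@addrI _ (h 0)); rewrite addr0 -hadd addr0.
split=> // v; elim=> [|m IH]; first by rewrite !mulr0n.
by rewrite !mulrS hadd IH.
Qed.

Lemma decomp1 (k p : nat) (h : 'rV['Z_p.+2]_k -> 'Z_4)
  (hadd : forall x y, h (x + y) = h x + h y) (a : 'rV['Z_p.+2]_k) :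
  h a = \sum_(j < k) h 'e_j *+ (a 0 j : nat).
Proof.
have [h0 hM] := addMn_lin hadd.
rewrite {1}(row_sum_delta a).
rewrite (big_morph h hadd h0).
apply: eq_bigr => j _.
by rewrite -[a 0 j]natr_Zp scaler_nat hM natr_Zp.
Qed.

Lemma enc4_inj (x y : 'Z_4) : odd x = odd y -> (1 < x)%N = (1 < y)%N -> x = y.
Proof.
move=> h1 h2; apply/val_inj; move: h1 h2.
by case: x => -[|[|[|[|?]]]] ?; case: y => -[|[|[|[|?]]]] ?.
Qed.
Lemma even4 (x : 'Z_4) : ~~ odd x -> x *+ 2 = 0.
Proof. move=> h; apply/val_inj; move: h. by case: x => -[|[|[|[|?]]]] ?. Qed.
Lemma even4b (x y : 'Z_4) : x *+ 2 = 0 -> y *+ 2 = 0 -> (1 < x)%N = (1 < y)%N -> x = y.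
Proof. move=> h1 h2 h3; apply/val_inj; move: h1 h2 h3.
by case: x => -[|[|[|[|?]]]] ?; case: y => -[|[|[|[|?]]]] ?. Qed.
Lemma lw1 : lee_weight 1 = 1%N. by []. Qed.
Lemma arith n k1 k2 : (n * 2 <= (2^k1).-1 * 2^k1 * 2^k2)%N ->
  (n <= 2 ^ (2 * k1 + k2 - 1) - 2 ^ (k1 + k2 - 1))%N.
Proof.
case: k1 => [|k]; first by rewrite /= muln0 mul0n; lia.
have -> : (2 * k.+1 + k2 - 1 = (k + k + k2).+1)%N by lia.
have -> : (k.+1 + k2 - 1 = (k + k2))%N by lia.
rewrite !expnS !expnD.
have := expn_gt0 2 k; have := expn_gt0 2 k2.
move: (2^k)%N (2^k2)%N => X Y; rewrite !ltnS => HX HY.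
nia.
Qed.

Lemma decomp2 (k1 k2 : nat) (g : 'rV['Z_4]_k1 -> 'rV['Z_2]_k2 -> 'Z_4)
  (gadd : forall a1 b1 a2 b2, g (a1 + a2) (b1 + b2) = g a1 b1 + g a2 b2) a b :
  g a b = \sum_(j < k1) g 'e_j 0 *+ (a 0 j : nat) + \sum_(j < k2) g 0 'e_j *+ (b 0 j : nat).
Proof.
have -> : g a b = g a 0 + g 0 b by rewrite -gadd addr0 add0r.
congr (_ + _).
  by apply: (decomp1 (h := g^~ 0)) => x y; rewrite -gadd addr0.
by apply: (decomp1 (h := g 0)) => x y; rewrite -gadd addr0.
Qed.

Lemma g00 (k1 k2 : nat) (g : 'rV['Z_4]_k1 -> 'rV['Z_2]_k2 -> 'Z_4)
  (gadd : forall a1 b1 a2 b2, g (a1 + a2) (b1 + b2) = g a1 b1 + g a2 b2) :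
  g 0 0 = 0.
Proof. by apply: (@addrI _ (g 0 0)); rewrite addr0 -gadd !addr0. Qed.

Lemma geven2 (k1 k2 : nat) (g : 'rV['Z_4]_k1 -> 'rV['Z_2]_k2 -> 'Z_4)
  (gadd : forall a1 b1 a2 b2, g (a1 + a2) (b1 + b2) = g a1 b1 + g a2 b2) j :
  g 0 'e_j *+ 2 = 0.
Proof.
rewrite mulr2n -gadd addr0.
have -> : ('e_j + 'e_j : 'rV['Z_2]_k2) = 0.
  apply/matrixP => r c; rewrite !mxE; by case: (_ && _); apply/val_inj.
exact: g00.
Qed.

Lemma geven (k1 k2 : nat) (g : 'rV['Z_4]_k1 -> 'rV['Z_2]_k2 -> 'Z_4)
  (gadd : forall a1 b1 a2 b2, g (a1 + a2) (b1 + b2) = g a1 b1 + g a2 b2) :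
  (forall j, g 'e_j 0 *+ 2 = 0) -> forall a b, g a b *+ 2 = 0.
Proof.
move=> he a b; rewrite (decomp2 gadd) mulrnDl -!sumrMnl.
rewrite !big1 ?addr0 // => j _; rewrite -mulrnA mulnC mulrnA.
  by rewrite geven2 // mul0rn.
by rewrite he mul0rn.
Qed.

Lemma lw_single n (i : 'I_n) (c : 'Z_4) :
  lee_weight_vec (\row_k (if k == i then c else 0)) = lee_weight c.
Proof.
rewrite /lee_weight_vec (bigD1 i) //= big1 ?addn0 => [|k /negPf kn]; rewrite mxE ?eqxx //.
by rewrite kn.
Qed.

Lemma lw_pair n (i j : 'I_n) (c : 'Z_4) : i != j ->
  lee_weight_vec (\row_k (if k == i then 1 else if k == j then c else 0)) = (1 + lee_weight c)%N.
Proof.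
move=> ij; rewrite /lee_weight_vec (bigD1 i) //= (bigD1 j) //= 1?eq_sym //.
rewrite big1 ?addn0 => [|k /andP[ki kj]]; rewrite !mxE ?eqxx.
  by rewrite eq_sym (negPf ij).
by rewrite (negPf ki) (negPf kj).
Qed.

End Helpers.


Local Open Scope ring_scope.
Theorem proposition4p2 (n k1 k2 : nat) (C : {set 'rV['Z_4]_n}) :
  z4_linear_code C -> z4_code_type k1 k2 C -> z4_projective C ->
  (n <= 2 ^ (2 * k1 + k2 - 1) - 2 ^ (k1 + k2 - 1))%N.
Proof.
move=> [C0 Cadd Cscale] [f [fadd finj fC Cf]] proj.
have P1 : forall i, ~ (forall a b, (f a b) 0 i *+ 2 = 0).
  move=> i H.
  suff: (3 <= lee_weight_vec (\row_k (if k == i then 2 else 0) : 'rV['Z_4]_n)%R)%N by rewrite lw_single.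
  apply: proj.
    rewrite inE; apply/forallP => y; apply/implyP => /Cf [a [b <-]].
    rewrite (bigD1 i) //= big1 ?addr0 => [|k /negPf kn]; rewrite mxE ?eqxx.
      by rewrite mulr_natl H.
    by rewrite kn mul0r.
  apply/eqP => /matrixP /(_ 0 i); rewrite !mxE eqxx => /eqP; by [].
have P2 : forall i j (c : 'Z_4), i != j -> lee_weight c = 1%N ->
    ~ (forall a b, (f a b) 0 i + c * (f a b) 0 j = 0).
  move=> i j c ij lc H.
  suff: (3 <= lee_weight_vec (\row_k (if k == i then 1 else if k == j then c else 0) : 'rV['Z_4]_n)%R)%N by rewrite lw_pair // lc.
  apply: proj.
    rewrite inE; apply/forallP => y; apply/implyP => /Cf [a [b <-]].
    rewrite (bigD1 i) //= (bigD1 j) //= 1?eq_sym //.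
    rewrite big1 ?addr0 => [|k /andP[ki kj]]; rewrite !mxE ?eqxx.
      by rewrite [j == i]eq_sym (negPf ij) mul1r H.
    by rewrite (negPf ki) (negPf kj) mul0r.
  apply/eqP => /matrixP /(_ 0 i); rewrite !mxE eqxx => /eqP; by [].
pose h (i : 'I_n) (s : bool) a b := if s then (f a b) 0 i else - (f a b) 0 i.
have hadd : forall i s a1 b1 a2 b2, h i s (a1 + a2) (b1 + b2) = h i s a1 b1 + h i s a2 b2.
  by move=> i s *; rewrite /h; case: s; rewrite fadd mxE // opprD.
pose phi (p : 'I_n * bool) : {ffun 'I_k1 -> bool} * {ffun 'I_k1 -> bool} * {ffun 'I_k2 -> bool} :=
  ([ffun j => odd (h p.1 p.2 'e_j 0%R)], [ffun j => (1 < h p.1 p.2 'e_j 0%R)%N],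
   [ffun j => (1 < h p.1 p.2 0%R 'e_j)%N]).
have phi_inj : injective phi.
  move=> [i s] [i' s'] /= [/ffunP e1 /ffunP e2 /ffunP e3].
  have E : forall a b, h i s a b = h i' s' a b.
    move=> a b; rewrite (decomp2 (hadd i s)) (decomp2 (hadd i' s')).
    congr (_ + _); apply: eq_bigr => j _; congr (_ *+ _).
      by apply: enc4_inj; [move: (e1 j) | move: (e2 j)]; rewrite !ffunE.
    apply: even4b; [exact: geven2 | exact: geven2 |].
    by move: (e3 j); rewrite !ffunE.
  clear e1 e2 e3.
  have [ii'|ii'] := eqVneq i i'.
    subst i'; case: s s' E => -[] // E; exfalso; apply: (P1 i) => a b;
      move: (E a b); rewrite /h => /eqP; rewrite ?(eq_sym (- _)) -subr_eq0 opprK -mulr2n => /eqP.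
      by [].
    by [].
  exfalso; case: s s' E => -[] E.
  - apply: (P2 i i' (-1) ii' erefl) => a b; move: (E a b); rewrite /h => ->.
    by rewrite mulN1r subrr.
  - apply: (P2 i i' 1 ii' erefl) => a b; move: (E a b); rewrite /h => ->.
    by rewrite mul1r addNr.
  - apply: (P2 i i' 1 ii' erefl) => a b; move: (E a b); rewrite /h => <-.
    by rewrite mul1r subrr.
  - apply: (P2 i i' (-1) ii' erefl) => a b; move: (E a b); rewrite /h => /oppr_inj ->.
    by rewrite mulN1r subrr.
pose A := [set t : {ffun 'I_k1 -> bool} * {ffun 'I_k1 -> bool} * {ffun 'I_k2 -> bool}
            | t.1.1 != [ffun => false]].
have sub : phi @: setT \subset A.
  apply/subsetP => t /imsetP [[i s] _ ->]; rewrite inE /=.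
  apply/eqP => /ffunP H; apply: (P1 i) => a b.
  have : h i s a b *+ 2 = 0.
    apply: geven => // j; apply: even4; by move: (H j); rewrite !ffunE => ->.
  by rewrite /h; case: s {H} => //; rewrite mulNrn => /eqP; rewrite oppr_eq0 => /eqP.
have cardA : #|A| = ((2 ^ k1).-1 * 2 ^ k1 * 2 ^ k2)%N.
  have -> : A = setX (setX [set~ [ffun => false]] setT) setT.
    by apply/setP => -[[x y] z]; rewrite !inE !andbT.
  by rewrite !cardsX cardsC1 !cardsT !card_ffun !card_bool !card_ord.
apply: arith; rewrite -cardA.
have := subset_leq_card sub; rewrite card_imset // cardsT card_prod card_ord card_bool.
by [].
Qed.
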